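(* The hereditary class property $\Delta_\omega$ = ''bounded maximum degree after deletion of a bounded number of vertices'' — the set of hereditary classes $\mathscr C$ for which there are integers $k,d$ such that every $G\in\mathscr C$ has a set $S$ of at most $k$ vertices with $G-S$ of maximum degree at most $d$ — is a decomposition horizon.
   Context: Graphs are finite and simple. A hereditary class is a class closed under isomorphism and induced subgraphs; a hereditary class property is a set $\Pi$ of hereditary classes closed under passing to hereditary subclasses. For non-decreasing $f$ and positive integer $p$, $\mathscr C$ has an $f$-bounded $\Pi$-decomposition with parameter $p$ if there is $\mathscr D_p\in\Pi$ such that every $G\in\mathscr C$ has a partition $V_1,\dots,V_N$ of $V(G)$ with $N\le f(|G|)$ and $G[V_{i_1}\cup\dots\cup V_{i_p}]\in\mathscr D_p$ for all $i_1,\dots,i_p\in[N]$. $\Pi^\ast$ is the set of hereditary classes that, for every positive integer $p$, have such a decomposition for some non-decreasing $f$ with $f(n)=n^{o(1)}$. $\Pi$ is a decomposition horizon if $\Pi^\ast=\Pi$. *)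

(* Defs.v *)
From mathcomp Require Import all_boot.
Set Implicit Arguments. Unset Strict Implicit. Unset Printing Implicit Defensive.

Record graph := Graph {
  gv : nat;
  gadj : rel 'I_gv;
  gsym : symmetric gadj;
  girr : irreflexive gadj }.
Arguments gadj : clear implicits.

Definition order (G : graph) : nat := gv G.

Definition induced_sub (H G : graph) : Prop :=
  exists f : 'I_(gv H) -> 'I_(gv G),
    injective f /\ forall x y, gadj H x y = gadj G (f x) (f y).

Definition gclass := graph -> Prop.

Definition hereditary (C : gclass) : Prop :=
  forall G H, C G -> induced_sub H G -> C H.

Section Induced.
Variables (G : graph) (S : {set 'I_(gv G)}).
Definition induced_adj : rel 'I_#|S| :=
  fun x y => gadj G (enum_val x) (enum_val y).
Lemma induced_sym : symmetric induced_adj.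
Proof. by move=> x y; rewrite /induced_adj gsym. Qed.
Lemma induced_irr : irreflexive induced_adj.
Proof. by move=> x; rewrite /induced_adj girr. Qed.
Definition induced : graph := Graph induced_sym induced_irr.
End Induced.

Definition delete (G : graph) (S : {set 'I_(gv G)}) : graph := induced (~: S).

Definition degree (G : graph) (v : 'I_(gv G)) : nat := #|[set u | gadj G v u]|.
Arguments degree : clear implicits.
Definition maxdeg (G : graph) : nat := \max_(v : 'I_(gv G)) degree G v.

Definition class_property := gclass -> Prop.

Definition Delta_omega : class_property := fun C =>
  hereditary C /\
  exists k d : nat, forall G : graph, C G ->
    exists S : {set 'I_(gv G)}, #|S| <= k /\ maxdeg (delete S) <= d.

(* f(n) = n^{o(1)}: for every eps > 0, eventually f(n) <= n^eps; equivalently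
   (taking eps = 1/k) for every positive integer k, eventually f(n)^k <= n. *)
Definition subpoly (f : nat -> nat) : Prop :=
  forall k : nat, 0 < k -> exists n0 : nat, forall n : nat, n0 <= n -> f n ^ k <= n.

Definition has_decomposition (Pi : class_property) (C : gclass)
    (f : nat -> nat) (p : nat) : Prop :=
  exists D : gclass, Pi D /\
    forall G : graph, C G ->
      exists (N : nat) (V : 'I_N -> {set 'I_(gv G)}),
        N <= f (order G) /\
        (forall x : 'I_(gv G), exists! i : 'I_N, x \in V i) /\
        forall i : 'I_p -> 'I_N, D (induced (\bigcup_(j < p) V (i j))).

Definition star (Pi : class_property) : class_property := fun C =>
  hereditary C /\
  forall p : nat, 0 < p ->
    exists f : nat -> nat, {homo f : m n / m <= n} /\ subpoly f /\
      has_decomposition Pi C f p.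

Definition decomposition_horizon (Pi : class_property) : Prop :=
  forall C : gclass, star Pi C <-> Pi C.

(* Main.v *)
Require Import Defs.
From mathcomp Require Import all_boot zify.
From Stdlib Require Import Classical.
Set Implicit Arguments. Unset Strict Implicit. Unset Printing Implicit Defensive.

Notation ev A := (@enum_val _ (pred_of_set A)).

Definition nb (G : graph) (B : {set 'I_(gv G)}) (v : 'I_(gv G)) : nat :=
  #|[set u in B | gadj G v u]|.
Arguments nb : clear implicits.

Lemma card_bigcup_le (T I : finType) (P : pred I) (F : I -> {set T}) :
  #|\bigcup_(i | P i) F i| <= \sum_(i | P i) #|F i|.
Proof.
elim/big_rec2: _; first by rewrite cards0.
move=> i A n _ h; apply: leq_trans (leq_card_setU _ _) _.
by rewrite leq_add2l.
Qed.

Lemma E_compl (T : finType) (A : {set T}) (B : {set 'I_#|A|}) :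
  (ev A) @: (~: B) = A :\: ((ev A) @: B).
Proof.
apply/setP => u; rewrite !inE.
case: (boolP (u \in A)) => uA.
  rewrite -(enum_rankK_in uA uA) !mem_imset; try exact: enum_val_inj.
  by rewrite inE andbT.
rewrite andbF; apply/imsetP => -[x _ ux].
by move: uA; rewrite ux enum_valP.
Qed.

Lemma E_all (T : finType) (A : {set T}) :
  (ev A) @: [set: 'I_#|A|] = A.
Proof. by rewrite -setC0 E_compl imset0 setD0. Qed.

Lemma nbrs_induced (G : graph) (A : {set 'I_(gv G)}) (x : 'I_#|A|)
  (B : {set 'I_#|A|}) :
  nb (induced A) B x = nb G ((ev A) @: B) (enum_val x).
Proof.
rewrite /nb -(card_imset _ enum_val_inj); apply: eq_card => u.
apply/imsetP/idP.
  move=> [y]; rewrite inE => /andP[yB yadj] ->; rewrite inE (mem_imset _ _ enum_val_inj) yB; exact: yadj.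
rewrite inE => /andP[/imsetP[y yB ->] yadj].
by exists y => //; rewrite inE yB.
Qed.

Lemma L1 (G : graph) (A : {set 'I_(gv G)}) D :
  maxdeg (induced A) <= D <-> forall v, v \in A -> nb G A v <= D.
Proof.
have deg : forall x, degree (induced A) x = nb G A (enum_val x).
  move=> x; have := nbrs_induced x setT; rewrite E_all /nb /degree => <-.
  by apply: eq_card => y; rewrite !inE.
split.
  move=> h v vA; rewrite -(enum_rankK_in vA vA) -deg.
  apply: leq_trans h; exact: (@leq_bigmax _ (fun v => degree (induced A) v) (enum_rank_in vA v : 'I_(gv (induced A)))).
move=> h; apply/bigmax_leqP => x _; rewrite deg; apply: h; exact: enum_valP.
Qed.

Lemma T_lem (G : graph) (A : {set 'I_(gv G)}) (S' : {set 'I_#|A|}) d :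
  maxdeg (@delete (induced A) S') <= d ->
  forall v, v \in A -> v \notin (ev A) @: S' -> nb G (A :\: ((ev A) @: S')) v <= d.
Proof.
move=> /L1 h v vA vS.
have xS : enum_rank_in vA v \notin S'.
  apply: contra vS => xS; rewrite -(enum_rankK_in vA vA); exact: imset_f.
have := h (enum_rank_in vA v); rewrite inE xS nbrs_induced E_compl enum_rankK_in //; exact.
Qed.

Lemma induced_sub_induced (G : graph) (A : {set 'I_(gv G)}) : induced_sub (induced A) G.
Proof. exists enum_val; split; [exact: enum_val_inj | by []]. Qed.

Lemma key (G : graph) (D : gclass) k d N (V : 'I_N -> {set 'I_(gv G)}) :
  (forall H, D H -> exists S : {set 'I_(gv H)}, #|S| <= k /\ maxdeg (delete S) <= d) ->
  (forall x, exists! i, x \in V i) ->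
  (forall i : 'I_2 -> 'I_N, D (induced (\bigcup_(j < 2) V (i j)))) ->
  exists S : {set 'I_(gv G)}, #|S| <= N*N*k /\ forall v, v \notin S -> nb G (~:S) v <= N*d.
Proof.
move=> Dp part HD.
have step : forall ab : 'I_N * 'I_N, exists S : {set 'I_(gv G)},
   #|S| <= k /\ forall v, v \in V ab.1 -> v \notin S -> nb G (V ab.2 :\: S) v <= d.
  move=> [a b] /=.
  pose i := fun j : 'I_2 => if val j == 0 then a else b.
  set A := \bigcup_(j < 2) V (i j).
  have sa : V a \subset A := @bigcup_sup _ _ ord0 _ (fun j => V (i j)) isT.
  have sb : V b \subset A := @bigcup_sup _ _ (Ordinal (isT : 1 < 2)) _ (fun j => V (i j)) isT.
  have [S' [cS' mS']] := Dp _ (HD i).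
  exists ((ev A) @: S'); split; first exact: leq_trans (leq_imset_card _ _) cS'.
  move=> v va vS.
  have vA : v \in A := subsetP sa v va.
  apply: leq_trans (T_lem mS' vA vS).
  apply: subset_leq_card; apply/subsetP => u; rewrite !inE => /andP[/andP[uS ub] ->].
  by rewrite uS (subsetP sb u ub).
have [F HF] := fin_all_exists step.
exists (\bigcup_(ab : 'I_N * 'I_N) F ab); split.
  apply: leq_trans (card_bigcup_le _ _) _.
  apply: leq_trans (_ : \sum_(ab : 'I_N * 'I_N) k <= _); first by apply: leq_sum => ab _; exact: (proj1 (HF ab)).
  by rewrite big_const iter_addn_0 card_prod !card_ord mulnC.
move=> v vS.
have [a [va _]] := part v.
rewrite /nb; apply: leq_trans (_ : #|\bigcup_(b : 'I_N) [set u in V b :\: F (a, b) | gadj G v u]| <= _).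
  apply: subset_leq_card; apply/subsetP => u; rewrite !inE => /andP[uS uadj].
  have [b [ub _]] := part u.
  apply/bigcupP; exists b => //; rewrite !inE ub uadj !andbT.
  by apply: contra uS => uF; apply/bigcupP; exists (a, b).
apply: leq_trans (card_bigcup_le _ _) _.
apply: leq_trans (_ : \sum_(b : 'I_N) d <= _).
  apply: leq_sum => b _; apply: (proj2 (HF (a, b))) => //.
  by apply: contra vS => vF; apply/bigcupP; exists (a,b).
by rewrite big_const iter_addn_0 card_ord mulnC.
Qed.

Lemma greedy (G : graph) t :
  ~ (exists S : {set 'I_(gv G)}, #|S| <= t /\ forall v, v \notin S -> nb G (~:S) v <= 2*t) ->
  forall j, j <= t.+1 -> exists W U : {set 'I_(gv G)},
   [/\ #|W| = j, W \subset U, #|U| <= j * (2*t+2) & forall w, w \in W -> 2*t+1 <= nb G U w].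
Proof.
move=> bad; elim=> [|j IH] hj.
  by exists set0, set0; rewrite cards0 sub0set; split=> // w; rewrite inE.
have [W [U [cW sWU cU hW]]] := IH (ltnW hj).
have [v [vW hv]] : exists v, v \notin W /\ 2*t < nb G (~:W) v.
  apply: NNPP => hn; apply: bad; exists W; split; first by rewrite cW -ltnS.
  move=> v vW; rewrite leqNgt; apply/negP => hv; apply: hn; exists v; split => //.
have hv' : 2*t+1 <= #|[set u in ~:W | gadj G v u]| by rewrite addn1.
have [s [us ss subs]] := card_geqP hv'.
set X := [set x in s].
have cX : #|X| = 2*t+1 by rewrite cardsE; move/card_uniqP: us => ->.
exists (v |: W), (v |: (U :|: X)); split.
- by rewrite cardsU1 vW cW add1n.
- by rewrite setUS // subsetU ?sWU.
- apply: leq_trans (_ : 1 + (#|U| + #|X|) <= _).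
    rewrite cardsU1; apply: leq_add; first by case: (_ \notin _).
    by rewrite cardsU leq_subr.
  rewrite cX; nia.
- move=> w; rewrite !inE => /orP[/eqP-> | wW].
    apply: leq_trans (_ : #|X| <= _); first by rewrite cX.
    apply: subset_leq_card; apply/subsetP => x; rewrite /X inE => xs.
    have := subs _ xs; rewrite !inE => /andP[_ ->].
    by rewrite xs !orbT.
  apply: leq_trans (hW w wW) _; apply: subset_leq_card; apply/subsetP => u.
  by rewrite !inE => /andP[uU ->]; rewrite uU !orbT.
Qed.

Lemma arith (N k d t : nat) : 2*(k+d+1)*(k+d+1) <= t -> N^8 <= t.+1*(2*t+2) ->
  N*N*k <= t /\ N*d <= t.
Proof.
move=> ht hN.
set c := k+d+1 in ht.
have h : N*N*c <= t.
  rewrite leqNgt; apply/negP => lt.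
  have h4 : (t.+1)^4 <= (N*N*c)^4 by rewrite leq_exp2r.
  have e : (N*N*c)^4 = N^8 * c^4.
    by rewrite !expnMn -expnD.
  have h5 : N^8 * c^4 <= t.+1*(2*t+2) * c^4 by rewrite leq_mul2r hN orbT.
  have h6 : (t.+1)^2 * (t.+1)^2 <= (t.+1)^2 * (2 * c^4).
    rewrite -expnD /=; apply: leq_trans h4 _; rewrite e; apply: leq_trans h5 _.
    rewrite -(leq_pmul2r (_ : 0 < 1)) //; nia.
  rewrite leq_pmul2l ?expn_gt0 // in h6.
  have hx : 2*(c*c) <= t by rewrite mulnA.
  move: h6; set x := c*c; have -> : c^4 = x*x by rewrite /x !mulnn -expnM.
  nia.
split.
  apply: leq_trans h; rewrite /c; nia.
clear hN; case: N h => [|N] h //.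
apply: leq_trans h; rewrite /c; nia.
Qed.

Theorem mainTheorem15 : decomposition_horizon Delta_omega.
Proof.
move=> C; split.
- move=> [hC /(_ 2 isT) [f [fmono [fsub [D [[hD [k [d Dp]]] dec]]]]]].
  split => //.
  have [n0 Hn0] := fsub 8 isT.
  pose t := 2*(k+d+1)*(k+d+1) + n0.
  have ht : 2*(k+d+1)*(k+d+1) <= t by rewrite leq_addr.
  exists t, (2*t) => G CG.
  apply: NNPP => notgood.
  have bad : ~ (exists S : {set 'I_(gv G)}, #|S| <= t /\ forall v, v \notin S -> nb G (~:S) v <= 2*t).
    move=> [S [cS hS]]; apply: notgood; exists S; split => //.
    by apply/L1 => v; rewrite inE; exact: hS.
  have [W [U [cW sWU cU hW]]] := greedy bad (leqnn t.+1).
  have CH : C (induced U) := hC _ _ CG (induced_sub_induced U).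
  have [N [V [HN [part HD]]]] := dec _ CH.
  have [S [cS hS]] := key Dp part HD.
  have HN8 : N ^ 8 <= t.+1 * (2*t+2).
    apply: leq_trans (_ : f (t.+1 * (2*t+2)) ^ 8 <= _).
      rewrite leq_exp2r //; apply: leq_trans HN _; apply: fmono; exact: cU.
    apply: Hn0; rewrite /t; nia.
  have [a1 a2] := arith ht HN8.
  pose S0 := (ev U) @: S.
  have cS0 : #|S0| <= t by apply: leq_trans (leq_imset_card _ _) (leq_trans cS a1).
  have [w wW wS0] : exists2 w, w \in W & w \notin S0.
    apply: NNPP => hn.
    have : W \subset S0.
      apply/subsetP => w wW; apply: NNPP => wS; apply: hn; exists w => //; exact/negP.
    move/subset_leq_card; rewrite cW; lia.
  have wU : w \in U := subsetP sWU w wW.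
  have xS : enum_rank_in wU w \notin S.
    apply: contra wS0 => xS; rewrite -(enum_rankK_in wU wU); exact: imset_f.
  have := hS _ xS; rewrite nbrs_induced E_compl enum_rankK_in // => hb.
  have hw := hW w wW.
  have : nb G U w <= nb G (U :\: S0) w + #|S0|.
    rewrite /nb; apply: leq_trans (_ : #|[set u in U :\: S0 | gadj G w u] :|: S0| <= _).
      apply: subset_leq_card; apply/subsetP => u; rewrite !inE => /andP[uU uadj].
      by case: (u \in S0); rewrite /= ?uU ?uadj ?orbT.
    by rewrite cardsU leq_subr.
  move=> hh; have h3 : nb G (U :\: S0) w + #|S0| <= N*d + t := leq_add hb cS0.
  have := leq_trans hw (leq_trans hh h3); lia.
- move=> [hC Hkd]; split => // p p0.
  exists (fun _ => 1); split; first by [].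
  split; first by move=> e e0; exists 1 => n n1; rewrite exp1n.
  exists C; split; first by split.
  move=> G CG; exists 1, (fun _ => setT); split => //; split.
    move=> x; exists ord0; split; first by rewrite inE.
    by move=> i _; rewrite [i]ord1.
  move=> i; exact: hC _ _ CG (induced_sub_induced _).
Qed.
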